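(* Let $R:\mathbb{C}^{N_s}\to\mathbb{R}$ be the function $$R(\boldsymbol{\theta})=\sum_{k=1}^K\omega_k\Big[\log\det(\sigma_0^2\mathbf{I}+\mathbf{H}_k(\boldsymbol{\theta})\bar{\mathbf{W}}\mathbf{H}_k(\boldsymbol{\theta})^{\mathsf H})-\log\det(\sigma_0^2\mathbf{I}+\mathbf{H}_k(\boldsymbol{\theta})\bar{\mathbf{W}}_k\mathbf{H}_k(\boldsymbol{\theta})^{\mathsf H})\Big],$$ where $\mathbf{H}_k(\boldsymbol{\theta})=\mathbf{D}_k+\mathbf{U}_k\mathrm{diag}(\boldsymbol{\theta})\mathbf{G}$, $\bar{\mathbf{W}}=\sum_{j}\mathbf{W}_j\mathbf{W}_j^{\mathsf H}$, $\bar{\mathbf{W}}_k=\sum_{j\neq k}\mathbf{W}_j\mathbf{W}_j^{\mathsf H}$ for fixed matrices $\mathbf{G}\in\mathbb{C}^{N_s\times N_t}$, $\mathbf{U}_k\in\mathbb{C}^{N_r\times N_s}$, $\mathbf{D}_k\in\mathbb{C}^{N_r\times N_t}$, $\mathbf{W}_k\in\mathbb{C}^{N_t\times N_d}$, $\sigma_0^2>0$ and weights $\omega_k$. Let $\mathcal{Q}=\{\boldsymbol{\theta}\in\mathbb{C}^{N_s}:|\theta_n|=1,\ n=1,\dots,N_s\}$, let $\Pi_{\mathcal{Q}}$ denote the projection onto $\mathcal{Q}$, let $\boldsymbol{\theta}^{(\ell)}\in\mathcal{Q}$, and let $\boldsymbol{\Xi}=\mathrm{diag}\big(1/|\nabla_{\boldsymbol{\theta}}R(\boldsymbol{\theta}^{(\ell)})|\big)$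 (elementwise modulus and division). For a step size $\alpha>0$ set $\boldsymbol{\theta}(\alpha)=\Pi_{\mathcal{Q}}\big(\boldsymbol{\theta}^{(\ell)}+\alpha\boldsymbol{\Xi}\nabla_{\boldsymbol{\theta}}R(\boldsymbol{\theta}^{(\ell)})\big)$. Consider the backtracking line search that starts from an initial $\alpha=c>0$ and replaces $\alpha\leftarrow\eta\alpha$ (with fixed $0<\eta<1$) until $$R(\boldsymbol{\theta}(\alpha))\ge R(\boldsymbol{\theta}^{(\ell)})+\frac{\beta}{2N_s}\|\boldsymbol{\theta}(\alpha)-\boldsymbol{\theta}^{(\ell)}\|^2,$$ where $\beta>0$ is sufficiently small. Then this line search terminates after a finite number of steps, for any positive initial step size $c$.
   Context: The complex-valued gradient is $\nabla_{\boldsymbol{\theta}}R=\frac12\big(\frac{\partial R}{\partial\Re\{\boldsymbol{\theta}\}}+j\frac{\partial R}{\partial\Im\{\boldsymbol{\theta}\}}\big)$; $\mathrm{diag}(\mathbf{x})$ is the diagonal matrix with diagonal $\mathbf{x}$; $\|\cdot\|$ is the Euclidean norm; $\log$ is the natural logarithm. The procedure is the scaled projected gradient step for the RIS phase shifts $\boldsymbol{\theta}$ (unit-modulus constraint) in weighted sum-rate maximization for an RIS-aided downlink multiuser MIMO system with fixed precoders $\mathbf{W}_k$. *)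

(* Defs.v *)
From HB Require Import structures.
From mathcomp Require Import all_boot all_order all_algebra.
From mathcomp Require Import complex.
From mathcomp Require Import all_classical all_reals all_analysis.

Set Implicit Arguments.
Unset Strict Implicit.
Unset Printing Implicit Defensive.

Import Order.TTheory GRing.Theory Num.Theory.
Local Open Scope ring_scope.
Local Open Scope complex_scope.

Section RIS.
Variable R : realType.
Local Notation C := R[i].

Definition hadj m n (A : 'M[C]_(m, n)) : 'M[C]_(n, m) := (map_mx conjc A)^T.

(* log det of a (Hermitian positive definite) matrix: natural log of its
   (real, positive) determinant *)
Definition logdet n (M : 'M[C]_n) : R := ln (complex.Re (\det M)).

Definition Hk Ns Nt Nr (D : 'M[C]_(Nr, Nt)) (U : 'M[C]_(Nr, Ns))
  (G : 'M[C]_(Ns, Nt)) (th : 'cV[C]_Ns) : 'M[C]_(Nr, Nt) :=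
  D + U *m diag_mx th^T *m G.

Definition Wbar K Nt Nd (W : 'I_K -> 'M[C]_(Nt, Nd)) : 'M[C]_Nt :=
  \sum_(j < K) W j *m hadj (W j).
Definition Wbark K Nt Nd (W : 'I_K -> 'M[C]_(Nt, Nd)) (k : 'I_K) : 'M[C]_Nt :=
  \sum_(j < K | j != k) W j *m hadj (W j).

Definition wsr K Ns Nt Nr Nd (G : 'M[C]_(Ns, Nt)) (U : 'I_K -> 'M[C]_(Nr, Ns))
  (D : 'I_K -> 'M[C]_(Nr, Nt)) (W : 'I_K -> 'M[C]_(Nt, Nd)) (s2 : R)
  (w : 'I_K -> R) (th : 'cV[C]_Ns) : R :=
  \sum_(k < K)
    w k * (logdet ((s2%:C)%:M + Hk (D k) (U k) G th *m Wbar W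
                                 *m hadj (Hk (D k) (U k) G th))
         - logdet ((s2%:C)%:M + Hk (D k) (U k) G th *m Wbark W k
                                 *m hadj (Hk (D k) (U k) G th))).

Definition evec n (i : 'I_n) : 'cV[C]_n := \col_j (j == i)%:R.

Definition dRe n (f : 'cV[C]_n -> R) (th : 'cV[C]_n) (i : 'I_n) : R :=
  derive1 (fun t : R => f (th + t%:C *: evec i)) 0.
Definition dIm n (f : 'cV[C]_n -> R) (th : 'cV[C]_n) (i : 'I_n) : R :=
  derive1 (fun t : R => f (th + ('i * t%:C) *: evec i)) 0.

Definition cgrad n (f : 'cV[C]_n -> R) (th : 'cV[C]_n) : 'cV[C]_n :=
  \col_i (((dRe f th i)%:C + 'i * (dIm f th i)%:C) / 2%:R).

Definition inQ n (th : 'cV[C]_n) : Prop := forall i, `|th i 0| = 1.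

(* projection onto Q: x_i / |x_i| (convention: 1 if x_i = 0) *)
Definition projQ n (x : 'cV[C]_n) : 'cV[C]_n :=
  \col_i (if x i 0 == 0 then 1 else x i 0 / `|x i 0|).

(* Xi = diag(1 / |g|) (elementwise; convention 1/0 = 0) *)
Definition Xi n (g : 'cV[C]_n) : 'M[C]_n := diag_mx (\row_i (`|g i 0|)^-1).

Definition sqnorm n (v : 'cV[C]_n) : R :=
  \sum_i (complex.Re (v i 0) ^+ 2 + complex.Im (v i 0) ^+ 2).

Definition theta_step n (f : 'cV[C]_n -> R) (th : 'cV[C]_n) (alpha : R)
  : 'cV[C]_n :=
  projQ (th + alpha%:C *: (Xi (cgrad f th) *m cgrad f th)).

Definition accept n (f : 'cV[C]_n -> R) (th : 'cV[C]_n) (beta alpha : R)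
  : Prop :=
  f (theta_step f th alpha) >=
  f th + beta / (2 * n%:R) * sqnorm (theta_step f th alpha - th).

End RIS.

(* Main.v *)
Require Import Defs.
From HB Require Import structures.
From mathcomp Require Import all_boot all_order all_algebra.
From mathcomp Require Import complex.
From mathcomp Require Import all_classical all_reals all_analysis.
From mathcomp Require Import ring lra.
Import Order.TTheory GRing.Theory Num.Theory numFieldNormedType.Exports.
Local Open Scope ring_scope.
Set Implicit Arguments.
Unset Strict Implicit.

Section Aux.
Variable R : realType.

Lemma absM_le (x y : R) : `|x * y| <= (x ^+ 2 + y ^+ 2) / 2.
Proof.
rewrite normrM -(real_normK (num_real x)) -(real_normK (num_real y)).
have := sqr_ge0 (`|x| - `|y|). nra.
Qed.

Lemma sq3_le (x y z : R) : (x + y + z) ^+ 2 <= 3 * (x ^+ 2 + y ^+ 2 + z ^+ 2).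
Proof.
have := sqr_ge0 (x - y); have := sqr_ge0 (y - z); have := sqr_ge0 (x - z). nra.
Qed.

Lemma ln_local (x : R) : x != 0 -> exists c rr KK, 0 < rr /\ 0 <= KK /\
  forall h, `|h| <= rr -> `|ln (x + h) - ln x - c * h| <= KK * h ^+ 2.
Proof.
move=> x0; case: (ltgtP x 0) => [xlt|xgt|xe]; last by rewrite xe eqxx in x0.
- exists 0, (- x / 2), 0; split; first lra. split; first lra.
  move=> h; rewrite ler_norml => /andP[h1 h2].
  rewrite !ln0; [|lra|lra]. by rewrite mul0r !subr0 normr0 mul0r.
- exists x^-1, (x / 2), (2 / x ^+ 2); split; first lra.
  split; first by apply: divr_ge0 => //; exact: sqr_ge0.
  move=> h; rewrite ler_norml => /andP[h1 h2].
  set u := h / x.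
  have xu : x + h = x * (1 + u) by rewrite /u; field; lra.
  have u1 : - (1/2) <= u <= 1/2.
    rewrite /u; apply/andP; split.
    + rewrite ler_pdivlMr //; lra.
    + rewrite ler_pdivrMr //; lra.
  case/andP: u1 => u1 u2.
  have pu : 0 < 1 + u by lra.
  rewrite xu lnM ?posrE //.
  have -> : ln x + ln (1 + u) - ln x - x^-1 * h = ln (1 + u) - u.
    rewrite /u; ring.
  have -> : 2 / x ^+ 2 * h ^+ 2 = 2 * u ^+ 2 by rewrite /u; field; lra.
  have up : ln (1 + u) <= u by apply: le_ln1Dx; lra.
  set w := (1 + u)^-1.
  have wp : 0 < w by rewrite /w invr_gt0.
  have wu : w * (1 + u) = 1 by rewrite /w mulVf //; lra.
  have lo : 1 - w <= ln (1 + u).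
    have : ln (1 + (w - 1)) <= w - 1 by apply: le_ln1Dx; lra.
    rewrite addrC subrK /w lnV ?posrE //. lra.
  have key : u - 2 * u ^+ 2 <= 1 - w.
    have : 0 <= u ^+ 2 * (1 + 2 * u) by apply: mulr_ge0; [exact: sqr_ge0|lra].
    nra.
  rewrite ler_norml; apply/andP; split; [lra|].
  have := sqr_ge0 u; lra.
Qed.

Lemma deriv_quad (g : R -> R) (c0 a r K : R) : 0 < r -> 0 <= K ->
  (forall t, `|t| <= r -> `|g t - c0 - a * t| <= K * t ^+ 2) ->
  derive1 g 0 = a.
Proof.
move=> r0 K0 H.
have g0 : g 0 = c0.
  have := H 0; rewrite normr0 => /(_ (ltW r0)).
  rewrite mulr0 expr2 mulr0 mulr0 subr0 normr_le0 subr_eq0 => /eqP //.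
rewrite /derive1; apply: cvg_lim => //.
apply/cvgrPdist_le => eps eps0.
have m0 : 0 < Num.min r (eps / (K + 1)).
  rewrite lt_min r0 /=; apply: divr_gt0 => //; lra.
near=> t.
have tn0 : t != 0.
  near: t; exact: nbhs_dnbhs_neq.
have ts : `|t| < Num.min r (eps / (K + 1)) by near: t; exact: dnbhs0_lt.
move: ts; rewrite lt_min => /andP[tr te].
have := H t (ltW tr); rewrite g0 addr0.
set D := g t - c0 => HD.
have -> : a - t^-1 *: D = - (t^-1 * (D - a * t)).
  rewrite /GRing.scale /=; field; exact: tn0.
rewrite normrN normrM normfV.
have tp : 0 < `|t| by rewrite normr_gt0.
rewrite ler_pdivrMl //.
apply: le_trans HD _.
rewrite -(real_normK (num_real t)) expr2 mulrA.
have : K * `|t| <= eps.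
  move: te; rewrite ltr_pdivlMr; last lra.
  move=> h; have : K * `|t| <= (K + 1) * `|t| by nra. nra.
nra.
Unshelve. all: by end_near.
Qed.

End Aux.

Local Open Scope complex_scope.

Section Smooth.
Variables (R : realType) (n : nat) (th : 'cV[R[i]]_n).
Local Notation C := R[i].
Local Notation Re := (@complex.Re R).
Local Notation Im := (@complex.Im R).

Definition lin (a b : 'I_n -> R) (d : 'cV[C]_n) : R :=
  \sum_i (a i * Re (d i 0) + b i * Im (d i 0)).

Definition SmAB (f : 'cV[C]_n -> R) a b := exists r K M : R,
  0 < r /\ 0 <= K /\ 0 <= M /\ forall d, sqnorm d <= r ->
  `|f (th + d) - f th - lin a b d| <= K * sqnorm d /\
  (f (th + d) - f th) ^+ 2 <= M * sqnorm d.

Definition Sm f := exists a b, SmAB f a b.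

Lemma sqnorm_ge0 (d : 'cV[C]_n) : 0 <= sqnorm d.
Proof. by apply: sumr_ge0 => i _; apply: addr_ge0; exact: sqr_ge0. Qed.

Lemma cReD (x y : C) : Re (x + y) = Re x + Re y. Proof. by case: x; case: y. Qed.
Lemma cImD (x y : C) : Im (x + y) = Im x + Im y. Proof. by case: x; case: y. Qed.
Lemma cReM (x y : C) : Re (x * y) = Re x * Re y - Im x * Im y.
Proof. by case: x => a b; case: y => c d. Qed.
Lemma cImM (x y : C) : Im (x * y) = Re x * Im y + Im x * Re y.
Proof. by case: x => a b; case: y => c d /=; rewrite addrC. Qed.
Lemma cReJ (x : C) : Re (x^*)%C = Re x. Proof. by case: x. Qed.
Lemma cImJ (x : C) : Im (x^*)%C = - Im x. Proof. by case: x. Qed.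

Lemma Re_le_sqnorm i (d : 'cV[C]_n) : Re (d i 0) ^+ 2 <= sqnorm d.
Proof.
rewrite /sqnorm (bigD1 i) //=.
have h2 := sqr_ge0 (Im (d i 0)).
have h3 : 0 <= \sum_(j < n | j != i) (Re (d j 0) ^+ 2 + Im (d j 0) ^+ 2).
  by apply: sumr_ge0 => j _; apply: addr_ge0; exact: sqr_ge0.
lra.
Qed.

Lemma Im_le_sqnorm i (d : 'cV[C]_n) : Im (d i 0) ^+ 2 <= sqnorm d.
Proof.
rewrite /sqnorm (bigD1 i) //=.
have h2 := sqr_ge0 (Re (d i 0)).
have h3 : 0 <= \sum_(j < n | j != i) (Re (d j 0) ^+ 2 + Im (d j 0) ^+ 2).
  by apply: sumr_ge0 => j _; apply: addr_ge0; exact: sqr_ge0.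
lra.
Qed.

Lemma linD a1 b1 a2 b2 d :
  lin (fun i => a1 i + a2 i) (fun i => b1 i + b2 i) d = lin a1 b1 d + lin a2 b2 d.
Proof. rewrite /lin -big_split /=; apply: eq_bigr => i _; ring. Qed.

Lemma linZ c a b d :
  lin (fun i => c * a i) (fun i => c * b i) d = c * lin a b d.
Proof. rewrite /lin mulr_sumr; apply: eq_bigr => i _; ring. Qed.

Lemma lin0 d : lin (fun _ => 0) (fun _ => 0) d = 0.
Proof. by rewrite /lin big1 // => i _; rewrite !mul0r addr0. Qed.

Lemma Sm_ext f g : Sm f -> (forall x, f x = g x) -> Sm g.
Proof. by move=> H e; have <- : f = g by apply: funext. Qed.

Lemma Sm_const c : Sm (fun _ => c).
Proof.
exists (fun _ => 0), (fun _ => 0), 1, 0, 0; do 3! split => //.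
move=> d _; rewrite lin0 subrr subrr normr0 expr2 !mul0r; split => //; exact: sqnorm_ge0.
Qed.

Lemma Sm_Re i : Sm (fun x => Re (x i 0)).
Proof.
exists (fun j => (j == i)%:R), (fun _ => 0), 1, 0, 1; do 3! split => //.
move=> d _.
have -> : lin (fun j => (j == i)%:R) (fun _ => 0) d = Re (d i 0).
  rewrite /lin (bigD1 i) //= big1 ?addr0 => [|j /negbTE ->]; first by rewrite eqxx /= mul1r mul0r addr0.
  by rewrite !mul0r addr0.
rewrite mxE cReD [Re (th i 0) + _]addrC addrK subrr normr0 mul0r; split => //.
by rewrite mul1r Re_le_sqnorm.
Qed.

Lemma Sm_Im i : Sm (fun x => Im (x i 0)).
Proof.
exists (fun _ => 0), (fun j => (j == i)%:R), 1, 0, 1; do 3! split => //.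
move=> d _.
have -> : lin (fun _ => 0) (fun j => (j == i)%:R) d = Im (d i 0).
  rewrite /lin (bigD1 i) //= big1 ?addr0 => [|j /negbTE ->]; first by rewrite eqxx /= mul1r mul0r add0r.
  by rewrite !mul0r addr0.
rewrite mxE cImD [Im (th i 0) + _]addrC addrK subrr normr0 mul0r; split => //.
by rewrite mul1r Im_le_sqnorm.
Qed.

Lemma Sm_add f g : Sm f -> Sm g -> Sm (fun x => f x + g x).
Proof.
move=> [a1 [b1 [r1 [K1 [M1 [r10 [K10 [M10 H1]]]]]]]].
move=> [a2 [b2 [r2 [K2 [M2 [r20 [K20 [M20 H2]]]]]]]].
exists (fun i => a1 i + a2 i), (fun i => b1 i + b2 i), (Num.min r1 r2), (K1 + K2), (2 * (M1 + M2)).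
split; first by rewrite lt_min r10 r20.
split; first by apply: addr_ge0.
split; first by apply: mulr_ge0 => //; apply: addr_ge0.
move=> d; rewrite le_min => /andP[d1 d2].
have [h1 h1'] := H1 d d1; have [h2 h2'] := H2 d d2.
rewrite linD; split.
  have -> : f (th + d) + g (th + d) - (f th + g th) - (lin a1 b1 d + lin a2 b2 d)
    = (f (th + d) - f th - lin a1 b1 d) + (g (th + d) - g th - lin a2 b2 d) by ring.
  apply: le_trans (ler_normD _ _) _; rewrite mulrDl; exact: lerD.
have -> : f (th + d) + g (th + d) - (f th + g th) = (f (th + d) - f th) + (g (th + d) - g th) by ring.
set u := f (th + d) - f th in h1' *; set v := g (th + d) - g th in h2' *.
have e : (u + v) ^+ 2 = 2 * u ^+ 2 + 2 * v ^+ 2 - (u - v) ^+ 2 by ring.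
rewrite e; have := sqr_ge0 (u - v). lra.
Qed.

Lemma Sm_scale c f : Sm f -> Sm (fun x => c * f x).
Proof.
move=> [a1 [b1 [r1 [K1 [M1 [r10 [K10 [M10 H1]]]]]]]].
exists (fun i => c * a1 i), (fun i => c * b1 i), r1, (`|c| * K1), (c ^+ 2 * M1).
split => //; split; first by apply: mulr_ge0.
split; first by apply: mulr_ge0 => //; exact: sqr_ge0.
move=> d d1; have [h1 h1'] := H1 d d1; rewrite linZ; split.
  rewrite -mulrBr -mulrBr normrM -mulrA; apply: ler_wpM2l => //.
rewrite -mulrBr exprMn -mulrA; apply: ler_wpM2l => //; exact: sqr_ge0.
Qed.

Lemma Sm_mul f g : Sm f -> Sm g -> Sm (fun x => f x * g x).
Proof.
move=> [a1 [b1 [r1 [K1 [M1 [r10 [K10 [M10 H1]]]]]]]].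
move=> [a2 [b2 [r2 [K2 [M2 [r20 [K20 [M20 H2]]]]]]]].
set F := f th; set G := g th.
exists (fun i => F * a2 i + G * a1 i), (fun i => F * b2 i + G * b1 i), (Num.min r1 r2),
  (`|F| * K2 + `|G| * K1 + (M1 + M2) / 2), (3 * (F ^+ 2 * M2 + G ^+ 2 * M1 + M1 * M2 * r2)).
split; first by rewrite lt_min r10 r20.
have F2 := sqr_ge0 F; have G2 := sqr_ge0 G.
split.
  apply: addr_ge0; [apply: addr_ge0; apply: mulr_ge0 => // | apply: divr_ge0 => //; exact: addr_ge0].
split.
  apply: mulr_ge0 => //; apply: addr_ge0; [apply: addr_ge0|]; apply: mulr_ge0 => //.
    exact: mulr_ge0. exact: ltW.
move=> d; rewrite le_min => /andP[d1 d2].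
have [h1 h1'] := H1 d d1; have [h2 h2'] := H2 d d2.
have s0 := sqnorm_ge0 d.
rewrite linD !linZ.
set u := f (th + d) - f th in h1 h1' *; set v := g (th + d) - g th in h2 h2' *.
have ef : f (th + d) = F + u by rewrite /u /F; ring.
have eg : g (th + d) = G + v by rewrite /v /G; ring.
rewrite ef eg; split.
  have -> : (F + u) * (G + v) - F * G - (F * lin a2 b2 d + G * lin a1 b1 d)
    = F * (v - lin a2 b2 d) + G * (u - lin a1 b1 d) + u * v by ring.
  have n1 := ler_normD (F * (v - lin a2 b2 d) + G * (u - lin a1 b1 d)) (u * v).
  have n2 := ler_normD (F * (v - lin a2 b2 d)) (G * (u - lin a1 b1 d)).
  have t1 : `|F * (v - lin a2 b2 d)| <= `|F| * (K2 * sqnorm d).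
    by rewrite normrM; apply: ler_wpM2l.
  have t2 : `|G * (u - lin a1 b1 d)| <= `|G| * (K1 * sqnorm d).
    by rewrite normrM; apply: ler_wpM2l.
  have t3 := absM_le u v.
  have -> : (`|F| * K2 + `|G| * K1 + (M1 + M2) / 2) * sqnorm d =
    `|F| * (K2 * sqnorm d) + `|G| * (K1 * sqnorm d) + (M1 * sqnorm d + M2 * sqnorm d) / 2 by ring.
  lra.
have -> : (F + u) * (G + v) - F * G = F * v + G * u + u * v by ring.
apply: le_trans (sq3_le _ _ _) _.
rewrite !exprMn.
have uv : u ^+ 2 * v ^+ 2 <= M1 * sqnorm d * (M2 * r2).
  apply: ler_pM; [exact: sqr_ge0|exact: sqr_ge0|done|].
  apply: le_trans h2' _; apply: ler_wpM2l => //.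
have a1' : F ^+ 2 * v ^+ 2 <= F ^+ 2 * (M2 * sqnorm d) by apply: ler_wpM2l.
have a2' : G ^+ 2 * u ^+ 2 <= G ^+ 2 * (M1 * sqnorm d) by apply: ler_wpM2l.
have -> : 3 * (F ^+ 2 * M2 + G ^+ 2 * M1 + M1 * M2 * r2) * sqnorm d =
  3 * (F ^+ 2 * (M2 * sqnorm d) + G ^+ 2 * (M1 * sqnorm d) + M1 * sqnorm d * (M2 * r2)) by ring.
lra.
Qed.


Lemma Sm_ln f : Sm f -> f th != 0 -> Sm (fun x => ln (f x)).
Proof.
move=> [a [b [r [K [M [r0 [K0 [M0 H]]]]]]]] fn0.
have [c [rr [KK [rr0 [KK0 Hl]]]]] := ln_local fn0.
set F := f th in fn0 Hl *.
have rr2 : 0 < rr ^+ 2 / (M + 1) by apply: divr_gt0; [exact: exprn_gt0|lra].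
exists (fun i => c * a i), (fun i => c * b i), (Num.min r (rr ^+ 2 / (M + 1))),
  (KK * M + `|c| * K), ((`|c| + KK * rr) ^+ 2 * M).
split; first by rewrite lt_min r0 rr2.
split; first by apply: addr_ge0; apply: mulr_ge0.
split; first by apply: mulr_ge0 => //; exact: sqr_ge0.
move=> d; rewrite le_min => /andP[d1 d2].
have [h1 h1'] := H d d1.
have s0 := sqnorm_ge0 d.
rewrite linZ.
set h := f (th + d) - F in h1 h1' *.
have ef : f (th + d) = F + h by rewrite /h; ring.
rewrite ef.
have hrr : h ^+ 2 <= rr ^+ 2.
  apply: le_trans h1' _.
  apply: le_trans (ler_wpM2l M0 d2) _.
  rewrite mulrA ler_pdivrMr; last lra.
  have := sqr_ge0 rr; nra.
have hn : `|h| <= rr.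
  have := normr_ge0 h; rewrite -(real_normK (num_real h)) in hrr; nra.
have Hh := Hl h hn.
split.
  have -> : ln (F + h) - ln F - c * lin a b d =
    (ln (F + h) - ln F - c * h) + c * (h - lin a b d) by ring.
  apply: le_trans (ler_normD _ _) _.
  rewrite normrM.
  have t1 : `|c| * `|h - lin a b d| <= `|c| * (K * sqnorm d) by apply: ler_wpM2l.
  have t2 : KK * h ^+ 2 <= KK * (M * sqnorm d) by apply: ler_wpM2l.
  have -> : (KK * M + `|c| * K) * sqnorm d = KK * (M * sqnorm d) + `|c| * (K * sqnorm d) by ring.
  lra.
set D := ln (F + h) - ln F.
have hD : `|D| <= (`|c| + KK * rr) * `|h|.
  have -> : D = (D - c * h) + c * h by ring.
  apply: le_trans (ler_normD _ _) _.
  rewrite normrM.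
  have : KK * h ^+ 2 <= KK * rr * `|h|.
    rewrite -(real_normK (num_real h)) expr2 -mulrA; apply: ler_wpM2l => //.
    by apply: ler_wpM2r => //.
  lra.
have B0 : 0 <= `|c| + KK * rr by apply: addr_ge0 => //; apply: mulr_ge0 => //; exact: ltW.
rewrite -(real_normK (num_real D)).
apply: le_trans (_ : ((`|c| + KK * rr) * `|h|) ^+ 2 <= _).
  have := normr_ge0 D; nra.
have t := ler_wpM2l (sqr_ge0 (`|c| + KK * rr)) h1'.
rewrite exprMn real_normK ?num_real //; apply: le_trans t _; by rewrite mulrA.
Qed.

Lemma Sm_big (I : Type) (s : seq I) (P : pred I) (F : I -> 'cV[C]_n -> R) :
  (forall i, P i -> Sm (F i)) -> Sm (fun x => \sum_(i <- s | P i) F i x).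
Proof.
move=> HF; elim: s => [|j s IH].
  by apply: Sm_ext (Sm_const 0) _ => x; rewrite big_nil.
case Pj: (P j).
  apply: Sm_ext (Sm_add (HF j Pj) IH) _ => x; by rewrite big_cons Pj.
by apply: Sm_ext IH _ => x; rewrite big_cons Pj.
Qed.

Lemma evec_entry (z : C) (i j : 'I_n) : (z *: evec R i) j 0 = if j == i then z else 0.
Proof. by rewrite !mxE; case: (j == i); rewrite ?mulr1 ?mulr0. Qed.

Lemma sqnorm_evec (z : C) (i : 'I_n) : sqnorm (z *: evec R i) = Re z ^+ 2 + Im z ^+ 2.
Proof.
rewrite /sqnorm (bigD1 i) //= big1 ?addr0 => [|j /negbTE ji]; first by rewrite evec_entry eqxx.
by rewrite evec_entry ji /= expr2 mul0r add0r.
Qed.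

Lemma lin_evec a b (z : C) (i : 'I_n) : lin a b (z *: evec R i) = a i * Re z + b i * Im z.
Proof.
rewrite /lin (bigD1 i) //= big1 ?addr0 => [|j /negbTE ji]; first by rewrite evec_entry eqxx.
by rewrite evec_entry ji /= !mulr0 addr0.
Qed.

Lemma SmAB_dir f a b (i : 'I_n) (z : C) : SmAB f a b -> Re z ^+ 2 + Im z ^+ 2 = 1 ->
  derive1 (fun t : R => f (th + (z * t%:C) *: evec R i)) 0 = a i * Re z + b i * Im z.
Proof.
move=> [r [K [M [r0 [K0 [M0 H]]]]]] z1.
apply: (@deriv_quad _ _ (f th) _ (Num.min 1 r) K) => //.
  by rewrite lt_min r0 ltr01.
move=> t; rewrite le_min => /andP[t1 tr].
have e1 : Re (z * t%:C) = Re z * t by rewrite cReM /= mulr0 subr0.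
have e2 : Im (z * t%:C) = Im z * t by rewrite cImM /= mulr0 add0r.
have sq : sqnorm ((z * t%:C) *: evec R i) = t ^+ 2.
  rewrite sqnorm_evec e1 e2 !exprMn -mulrDl z1 mul1r //.
have tt : t ^+ 2 <= r.
  rewrite -(real_normK (num_real t)); have := normr_ge0 t; nra.
have [|h _] := H ((z * t%:C) *: evec R i); first by rewrite sq.
move: h; rewrite sq lin_evec e1 e2.
have -> : a i * (Re z * t) + b i * (Im z * t) = (a i * Re z + b i * Im z) * t by ring.
move=> h; cbv beta; exact: h.
Qed.

Lemma SmAB_dRe f a b i : SmAB f a b -> dRe f th i = a i.
Proof.
move=> H.
have e : (fun t : R => f (th + t%:C *: evec R i)) = (fun t => f (th + (1 * t%:C) *: evec R i)).
  by apply: funext => t; rewrite mul1r.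
rewrite /dRe e.
have := @SmAB_dir f a b i 1 H.
have -> : Re 1 = 1 by []. Time have -> : Im 1 = 0 by [].
rewrite expr1n expr0n addr0 mulr1 mulr0 addr0.
move=> h; apply: h.
by [].
Qed.

Lemma SmAB_dIm f a b i : SmAB f a b -> dIm f th i = b i.
Proof.
move=> H; rewrite /dIm.
have := @SmAB_dir f a b i 'i%C H.
have -> : Re 'i = 0 by []. have -> : Im 'i = 1 by [].
rewrite expr1n expr0n add0r mulr1 mulr0 add0r.
move=> h; apply: h.
by [].
Qed.
End Smooth.

Local Open Scope complex_scope.

Section CSmooth.
Variables (R : realType) (n : nat) (th : 'cV[R[i]]_n).
Local Notation C := R[i].
Local Notation Re := (@complex.Re R).
Local Notation Im := (@complex.Im R).
Local Notation Sm := (Sm th).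

Definition CSm (F : 'cV[C]_n -> C) := Sm (fun x => Re (F x)) /\ Sm (fun x => Im (F x)).

Lemma CSm_ext F G : CSm F -> (forall x, F x = G x) -> CSm G.
Proof. by move=> H e; have <- : F = G by apply: funext. Qed.

Lemma CSm_const c : CSm (fun _ => c).
Proof. by split; apply: Sm_const. Qed.

Lemma CSm_coord i : CSm (fun x => x i 0).
Proof. by split; [apply: Sm_Re | apply: Sm_Im]. Qed.

Lemma CSm_add F G : CSm F -> CSm G -> CSm (fun x => F x + G x).
Proof.
move=> [F1 F2] [G1 G2]; split.
  by apply: Sm_ext (Sm_add F1 G1) _ => x; rewrite cReD.
by apply: Sm_ext (Sm_add F2 G2) _ => x; rewrite cImD.
Qed.

Lemma CSm_mul F G : CSm F -> CSm G -> CSm (fun x => F x * G x).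
Proof.
move=> [F1 F2] [G1 G2]; split.
  apply: Sm_ext (Sm_add (Sm_mul F1 G1) (Sm_scale (-1) (Sm_mul F2 G2))) _ => x.
  by rewrite cReM mulN1r.
by apply: Sm_ext (Sm_add (Sm_mul F1 G2) (Sm_mul F2 G1)) _ => x; rewrite cImM.
Qed.

Lemma CSm_conj F : CSm F -> CSm (fun x => (F x)^*).
Proof.
move=> [F1 F2]; split.
  by apply: Sm_ext F1 _ => x; rewrite cReJ.
by apply: Sm_ext (Sm_scale (-1) F2) _ => x; rewrite cImJ mulN1r.
Qed.

Lemma CSm_sum (I : Type) (s : seq I) (P : pred I) (F : I -> 'cV[C]_n -> C) :
  (forall i, P i -> CSm (F i)) -> CSm (fun x => \sum_(i <- s | P i) F i x).
Proof.
move=> HF; elim: s => [|j s IH].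
  by apply: CSm_ext (CSm_const 0) _ => x; rewrite big_nil.
case Pj: (P j).
  apply: CSm_ext (CSm_add (HF j Pj) IH) _ => x; by rewrite big_cons Pj.
by apply: CSm_ext IH _ => x; rewrite big_cons Pj.
Qed.

Lemma CSm_prod (I : Type) (s : seq I) (P : pred I) (F : I -> 'cV[C]_n -> C) :
  (forall i, P i -> CSm (F i)) -> CSm (fun x => \prod_(i <- s | P i) F i x).
Proof.
move=> HF; elim: s => [|j s IH].
  by apply: CSm_ext (CSm_const 1) _ => x; rewrite big_nil.
case Pj: (P j).
  apply: CSm_ext (CSm_mul (HF j Pj) IH) _ => x; by rewrite big_cons Pj.
by apply: CSm_ext IH _ => x; rewrite big_cons Pj.
Qed.

Definition MSm p q (F : 'cV[C]_n -> 'M[C]_(p, q)) := forall i j, CSm (fun x => F x i j).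

Lemma MSm_const p q (A : 'M[C]_(p, q)) : MSm (fun _ => A).
Proof. by move=> i j; apply: CSm_const. Qed.

Lemma MSm_add p q (F G : 'cV[C]_n -> 'M[C]_(p, q)) : MSm F -> MSm G -> MSm (fun x => F x + G x).
Proof. by move=> HF HG i j; apply: CSm_ext (CSm_add (HF i j) (HG i j)) _ => x; rewrite mxE. Qed.

Lemma MSm_mul p q r (F : 'cV[C]_n -> 'M[C]_(p, q)) (G : 'cV[C]_n -> 'M[C]_(q, r)) :
  MSm F -> MSm G -> MSm (fun x => F x *m G x).
Proof.
move=> HF HG i j.
apply: CSm_ext (CSm_sum (index_enum _) (P := xpredT) (F := fun k x => F x i k * G x k j) _) _.
  by move=> k _; apply: CSm_mul.
by move=> x; rewrite mxE.
Qed.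

Lemma MSm_hadj p q (F : 'cV[C]_n -> 'M[C]_(p, q)) : MSm F -> MSm (fun x => hadj (F x)).
Proof. by move=> HF i j; apply: CSm_ext (CSm_conj (HF j i)) _ => x; rewrite !mxE. Qed.

Lemma MSm_diag : MSm (fun x : 'cV[C]_n => diag_mx x^T).
Proof.
move=> i j; case ij: (i == j).
  by apply: CSm_ext (CSm_coord i) _ => x; rewrite !mxE ij mulr1n.
by apply: CSm_ext (CSm_const 0) _ => x; rewrite !mxE ij mulr0n.
Qed.

Lemma CSm_det p (F : 'cV[C]_n -> 'M[C]_p) : MSm F -> CSm (fun x => \det (F x)).
Proof.
move=> HF; rewrite /determinant.
apply: CSm_sum => s _; apply: CSm_mul; first exact: CSm_const.
by apply: CSm_prod => i _; apply: HF.
Qed.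

End CSmooth.

Local Open Scope complex_scope.

Section Det.
Variable R : realType.
Local Notation C := R[i].
Local Notation Re := (@complex.Re R).
Local Notation Im := (@complex.Im R).

Lemma hadjM m p q (X : 'M[C]_(m, p)) (Y : 'M[C]_(p, q)) : hadj (X *m Y) = hadj Y *m hadj X.
Proof.
apply/matrixP => i j; rewrite !mxE rmorph_sum; apply: eq_bigr => k _.
by rewrite !mxE rmorphM mulrC.
Qed.

Lemma hadjK m p (X : 'M[C]_(m, p)) : hadj (hadj X) = X.
Proof. by apply/matrixP => i j; rewrite !mxE conjcK. Qed.

Lemma hadjD m p (X Y : 'M[C]_(m, p)) : hadj (X + Y) = hadj X + hadj Y.
Proof. by apply/matrixP => i j; rewrite !mxE rmorphD. Qed.

Lemma hadj_scalar m (c : R) : hadj ((c%:C)%:M : 'M[C]_m) = (c%:C)%:M.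
Proof.
apply/matrixP => i j; rewrite !mxE eq_sym; case: (i == j); rewrite ?mulr1n ?mulr0n //.
  by rewrite conjc_real.
by rewrite conjc0.
Qed.

Lemma hadj_sum m p (I : Type) (s : seq I) (P : pred I) (F : I -> 'M[C]_(m, p)) :
  hadj (\sum_(i <- s | P i) F i) = \sum_(i <- s | P i) hadj (F i).
Proof.
apply: (big_morph (@hadj R m p)) => [X Y|]; first exact: hadjD.
by apply/matrixP => i j; rewrite !mxE conjc0.
Qed.

Lemma det_hadj m (M : 'M[C]_m) : \det (hadj M) = ((\det M)^*)%C.
Proof. by rewrite /hadj det_tr (det_map_mx conjc). Qed.

Lemma cRe_sum (I : Type) (s : seq I) (P : pred I) (F : I -> C) :
  Re (\sum_(i <- s | P i) F i) = \sum_(i <- s | P i) Re (F i).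
Proof. by apply: (big_morph (@complex.Re R)) => [x y|]; [exact: cReD|]. Qed.

Definition psq p (z : 'rV[C]_p) : R := \sum_k (Re (z 0 k) ^+ 2 + Im (z 0 k) ^+ 2).

Lemma psq_ge0 p (z : 'rV[C]_p) : 0 <= psq z.
Proof. by apply: sumr_ge0 => k _; apply: addr_ge0; exact: sqr_ge0. Qed.

Lemma psq_gt0 p (z : 'rV[C]_p) : z != 0 -> 0 < psq z.
Proof.
move=> zn0.
have [k zk] : exists k, z 0 k != 0.
  apply/existsP; apply: contraR zn0 => /existsPn H.
  apply/eqP/matrixP => i j; rewrite ord1 mxE.
  by move: (H j); rewrite negbK => /eqP.
rewrite /psq (bigD1 k) //=.
have : 0 < Re (z 0 k) ^+ 2 + Im (z 0 k) ^+ 2.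
  move: zk; case: (z 0 k) => a b /=; rewrite eq_complex /= negb_and => ab.
  have a2 := sqr_ge0 a; have b2 := sqr_ge0 b.
  case/orP: ab => h.
    have : 0 < a ^+ 2 by rewrite exprn_even_gt0 // h orbT.
    lra.
  have : 0 < b ^+ 2 by rewrite exprn_even_gt0 // h orbT.
  lra.
have : 0 <= \sum_(i < p | i != k) (Re (z 0 i) ^+ 2 + Im (z 0 i) ^+ 2).
  by apply: sumr_ge0 => i _; apply: addr_ge0; exact: sqr_ge0.
lra.
Qed.

Lemma Re_zz p (z : 'rV[C]_p) : Re ((z *m hadj z) 0 0) = psq z.
Proof.
rewrite mxE cRe_sum; apply: eq_bigr => k _.
rewrite !mxE cReM cReJ cImJ; ring.
Qed.

Lemma Re_det_neq0 r t d (A : 'M[C]_(r, t)) (I : Type) (s : seq I) (P : pred I)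
  (W : I -> 'M[C]_(t, d)) (s2 : R) : 0 < s2 ->
  Re (\det ((s2%:C)%:M + A *m (\sum_(j <- s | P j) W j *m hadj (W j)) *m hadj A)) != 0.
Proof.
move=> s20.
set Wb := \sum_(j <- s | P j) W j *m hadj (W j).
set M := (s2%:C)%:M + A *m Wb *m hadj A.
have hWb : hadj Wb = Wb.
  rewrite /Wb hadj_sum; apply: eq_bigr => j _; by rewrite hadjM hadjK.
have herm : hadj M = M.
  by rewrite /M hadjD hadj_scalar !hadjM hadjK hWb mulmxA.
have realdet : Im (\det M) = 0.
  have e := det_hadj M; rewrite herm in e.
  have := congr1 (@complex.Im R) e; rewrite cImJ; lra.
have dn0 : \det M != 0.
  apply/negP => /det0P [v vn0 vM].
  have e : (v *m M *m hadj v) 0 0 = 0 by rewrite vM mul0mx mxE.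
  have ex : v *m M *m hadj v = s2%:C *: (v *m hadj v) +
      \sum_(j <- s | P j) ((v *m A *m W j) *m hadj (v *m A *m W j)).
    rewrite /M mulmxDr mulmxDl mul_mx_scalar -scalemxAl; congr (_ + _).
    rewrite /Wb !mulmxA mulmx_sumr mulmx_suml mulmx_suml; apply: eq_bigr => j _.
    by rewrite !hadjM !mulmxA.
  have := congr1 (@complex.Re R) e.
  rewrite ex mxE [X in X + _]mxE cReD cReM /= mul0r subr0 summxE cRe_sum Re_zz.
  under eq_bigr do rewrite Re_zz.
  have p1 := psq_gt0 vn0.
  have p2 : 0 <= \sum_(j <- s | P j) psq (v *m A *m W j).
    by apply: sumr_ge0 => j _; exact: psq_ge0.
  have : 0 < s2 * psq v by apply: mulr_gt0.
  lra.
apply: contra dn0 => /eqP re0; apply/eqP.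
move: re0 realdet; case: (\det M) => a b /= -> -> //.
Qed.

End Det.

Local Open Scope complex_scope.

Section WSR.
Variables (R : realType) (K Ns Nt Nr Nd : nat)
  (G : 'M[R[i]]_(Ns, Nt)) (U : 'I_K -> 'M[R[i]]_(Nr, Ns))
  (D : 'I_K -> 'M[R[i]]_(Nr, Nt)) (W : 'I_K -> 'M[R[i]]_(Nt, Nd))
  (s2 : R) (w : 'I_K -> R) (th : 'cV[R[i]]_Ns).

Lemma MSm_Hk k : MSm th (fun x => Hk (D k) (U k) G x).
Proof.
apply: MSm_add; first exact: MSm_const.
apply: MSm_mul; last exact: MSm_const.
apply: MSm_mul; first exact: MSm_const.
exact: MSm_diag.
Qed.

Lemma Sm_logdet k (Wb : 'M[R[i]]_Nt) (I : Type) (s : seq I) (P : pred I)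
  (Wj : I -> 'M[R[i]]_(Nt, Nd)) :
  Wb = \sum_(j <- s | P j) Wj j *m hadj (Wj j) -> 0 < s2 ->
  Sm th (fun x => logdet ((s2%:C)%:M + Hk (D k) (U k) G x *m Wb *m hadj (Hk (D k) (U k) G x))).
Proof.
move=> eW s20; rewrite /logdet.
apply: Sm_ln.
  have H : MSm th (fun x => (s2%:C)%:M + Hk (D k) (U k) G x *m Wb *m hadj (Hk (D k) (U k) G x)).
    apply: MSm_add; first exact: MSm_const.
    apply: MSm_mul; last exact: MSm_hadj (MSm_Hk k).
    apply: MSm_mul; [exact: MSm_Hk | exact: MSm_const].
  exact: (CSm_det H).1.
rewrite eW; exact: Re_det_neq0.
Qed.

Lemma Sm_wsr : 0 < s2 -> Sm th (wsr G U D W s2 w).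
Proof.
move=> s20; rewrite /wsr.
apply: Sm_big => k _; apply: Sm_scale.
apply: Sm_ext (Sm_add (Sm_logdet k (Wj := W) (s := index_enum _) (P := xpredT) _ s20)
                      (Sm_scale (-1) (Sm_logdet k (Wj := W) (s := index_enum _) (P := fun j => j != k) _ s20))) _.
- by [].
- by [].
- by move=> x; rewrite mulN1r.
Qed.

End WSR.

Section RealComp.
Variable R : realType.

Lemma real_comp (x y p q al s : R) :
  x ^+ 2 + y ^+ 2 = 1 -> p ^+ 2 + q ^+ 2 = 1 -> 0 < al -> al <= 1 / 2 -> 0 <= s ->
  s ^+ 2 = (1 + al * p) ^+ 2 + al ^+ 2 * q ^+ 2 ->
  let v1 := x * (1 + al * p) - al * q * y in
  let v2 := y * (1 + al * p) + al * q * x in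
  [/\ (v1 / s - x) ^+ 2 + (v2 / s - y) ^+ 2 <= 4 * al ^+ 2,
      al * q ^+ 2 - 6 * al ^+ 2 <= (p * x - q * y) * (v1 / s - x) + (p * y + q * x) * (v2 / s - y)
    & q = 0 -> v1 / s = x /\ v2 / s = y].
Proof.
move=> xy pq al0 al1 s0 ss v1 v2.
have p1 : p ^+ 2 <= 1 by have := sqr_ge0 q; lra.
have q1 : q ^+ 2 <= 1 by have := sqr_ge0 p; lra.
have pb : -1 <= p <= 1.
  apply/andP; split; nra.
case/andP: pb => pb1 pb2.
have ap : 1 / 2 <= 1 + al * p by nra.
have sh : 1 / 2 <= s.
  have : (1/2) ^+ 2 <= s ^+ 2 by rewrite ss; have := sqr_ge0 (al * q); nra.
  nra.
have sn0 : s != 0 by apply/eqP => s0'; rewrite s0' in sh; lra.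
set e := s - 1 - al * p.
have ee : e * (s + 1 + al * p) = al ^+ 2 * q ^+ 2.
  rewrite /e; have -> : (s - 1 - al * p) * (s + 1 + al * p) = s ^+ 2 - (1 + al * p) ^+ 2 by ring.
  rewrite ss; ring.
have den : 1 <= s + 1 + al * p by lra.
have e0 : 0 <= e.
  have : 0 <= al ^+ 2 * q ^+ 2 by apply: mulr_ge0; exact: sqr_ge0.
  rewrite -ee; nra.
have e1 : e <= al ^+ 2 * q ^+ 2.
  rewrite -ee; nra.
have aq : al ^+ 2 * q ^+ 2 <= al ^+ 2 by have := sqr_ge0 al; nra.
have v12 : v1 ^+ 2 + v2 ^+ 2 = s ^+ 2.
  rewrite ss /v1 /v2.
  have -> : (x * (1 + al * p) - al * q * y) ^+ 2 + (y * (1 + al * p) + al * q * x) ^+ 2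
    = (x ^+ 2 + y ^+ 2) * ((1 + al * p) ^+ 2 + al ^+ 2 * q ^+ 2) by ring.
  by rewrite xy mul1r.
have xv : x * v1 + y * v2 = 1 + al * p.
  rewrite /v1 /v2.
  have -> : x * (x * (1 + al * p) - al * q * y) + y * (y * (1 + al * p) + al * q * x)
    = (x ^+ 2 + y ^+ 2) * (1 + al * p) by ring.
  by rewrite xy mul1r.
split.
- have -> : (v1 / s - x) ^+ 2 + (v2 / s - y) ^+ 2 =
     ((v1 ^+ 2 + v2 ^+ 2) - 2 * s * (x * v1 + y * v2) + s ^+ 2 * (x ^+ 2 + y ^+ 2)) / s ^+ 2.
    by field.
  rewrite v12 xv xy mulr1.
  have -> : (s ^+ 2 - 2 * s * (1 + al * p) + s ^+ 2) / s ^+ 2 = 2 * e / s.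
    by rewrite /e; field.
  rewrite ler_pdivrMr; last lra.
  nra.
- have -> : (p * x - q * y) * (v1 / s - x) + (p * y + q * x) * (v2 / s - y)
     = (p * (x * v1 + y * v2) + q * (x * v2 - y * v1)) / s - p * (x ^+ 2 + y ^+ 2).
    by field.
  have xv2 : x * v2 - y * v1 = al * q.
    rewrite /v1 /v2.
    have -> : x * (y * (1 + al * p) + al * q * x) - y * (x * (1 + al * p) - al * q * y)
      = (x ^+ 2 + y ^+ 2) * (al * q) by ring.
    by rewrite xy mul1r.
  rewrite xv xv2 xy mulr1.
  have -> : (p * (1 + al * p) + q * (al * q)) = p + al.
    have -> : p * (1 + al * p) + q * (al * q) = p + al * (p ^+ 2 + q ^+ 2) by ring.
    by rewrite pq mulr1.
  rewrite -subr_ge0.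
  have -> : (p + al) / s - p - (al * q ^+ 2 - 6 * al ^+ 2)
    = (p + al - p * s - (al * q ^+ 2 - 6 * al ^+ 2) * s) / s by field.
  apply: divr_ge0; last lra.
  have sE : s = 1 + al * p + e by rewrite /e; ring.
  rewrite sE.
  have -> : p + al - p * (1 + al * p + e) - (al * q ^+ 2 - 6 * al ^+ 2) * (1 + al * p + e)
    = al * (1 - p ^+ 2) - p * e - al * q ^+ 2 * (1 + al * p + e) + 6 * al ^+ 2 * (1 + al * p + e) by ring.
  have -> : 1 - p ^+ 2 = q ^+ 2 by lra.
  have h1 : - e <= p * e by nra.
  have h2 : al * q ^+ 2 * (al * p) <= al ^+ 2 by nra.
  have h3 : al * q ^+ 2 * e <= al * e by nra.
  have h4 : 6 * al ^+ 2 * (1 + al * p + e) >= 3 * al ^+ 2 by nra.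
  nra.
- move=> q0.
  have e00 : e = 0.
    have : e * (s + 1 + al * p) = 0 by rewrite ee q0 expr0n mulr0.
    move/eqP; rewrite mulf_eq0 => /orP[/eqP //|/eqP h]; lra.
  have sE : s = 1 + al * p by move: e00; rewrite /e => h; lra.
  rewrite /v1 /v2 q0 ?mulr0 ?mul0r ?subr0 ?addr0 -sE.
  by split; field.
Qed.

End RealComp.

Local Open Scope complex_scope.

Section CComp.
Variable R : realType.
Local Notation C := R[i].
Local Notation Re := (@complex.Re R).
Local Notation Im := (@complex.Im R).

Lemma Re_mulrc (z : C) (c : R) : Re (z * c%:C) = Re z * c.
Proof. by case: z => x y /=; ring. Qed.
Lemma Im_mulrc (z : C) (c : R) : Im (z * c%:C) = Im z * c.
Proof. by case: z => x y /=; ring. Qed.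
Lemma Re_addC (z w : C) : Re (z + w) = Re z + Re w. Proof. by case: z; case: w. Qed.
Lemma Im_addC (z w : C) : Im (z + w) = Im z + Im w. Proof. by case: z; case: w. Qed.
Lemma Re_oppC (z : C) : Re (- z) = - Re z. Proof. by case: z. Qed.
Lemma Im_oppC (z : C) : Im (- z) = - Im z. Proof. by case: z. Qed.
Lemma c_ext (z w : C) : Re z = Re w -> Im z = Im w -> z = w.
Proof. by case: z => ? ?; case: w => ? ? /= -> ->. Qed.
Lemma invC_real (c : R) : (c%:C)^-1 = (c^-1)%:C.
Proof. by rewrite fmorphV. Qed.
Lemma nat_C (k : nat) : (k%:R : C) = (k%:R : R)%:C.
Proof. by rewrite rmorph_nat. Qed.
Lemma normC_sqrt (z : C) : `|z| = (Num.sqrt (Re z ^+ 2 + Im z ^+ 2))%:C.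
Proof. exact: normc_def. Qed.

Lemma aux_pos (p q al : R) : p ^+ 2 + q ^+ 2 = 1 -> 0 < al -> al <= 1 / 2 ->
  0 < (1 + al * p) ^+ 2 + al ^+ 2 * q ^+ 2.
Proof.
move=> pq al0 al1.
have p1 : p ^+ 2 <= 1 by have := sqr_ge0 q; lra.
have : -1 <= p <= 1 by apply/andP; split; nra.
case/andP => pb1 pb2.
have h0 : 0 < 1 + al * p by nra.
have h1 : 0 < (1 + al * p) ^+ 2 by exact: exprn_gt0.
have h2 : 0 <= al ^+ 2 * q ^+ 2 by apply: mulr_ge0; exact: sqr_ge0.
lra.
Qed.

Lemma comp_C (t : C) (a b al : R) : `|t| = 1 -> 0 < al -> al <= 1 / 2 ->
  let g := (a%:C + 'i * b%:C) / 2%:R in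
  let v := t + al%:C * (`|g|^-1 * g) in
  let th' := if v == 0 then 1 else v / `|v| in
  let Q := Re t * b - Im t * a in
  let rho := Num.sqrt (a ^+ 2 + b ^+ 2) in
  [/\ Re (th' - t) ^+ 2 + Im (th' - t) ^+ 2 <= 4 * al ^+ 2,
      al * (Q ^+ 2 / rho) - 6 * rho * al ^+ 2 <= a * Re (th' - t) + b * Im (th' - t)
    & Q = 0 -> th' = t].
Proof.
move=> t1 al0 al1 g v th' Q rho.
set x := Re t; set y := Im t.
have xy : x ^+ 2 + y ^+ 2 = 1.
  have := t1; rewrite normC_sqrt => -[] h.
  have : Num.sqrt (x ^+ 2 + y ^+ 2) ^+ 2 = 1 by rewrite h expr1n.
  by rewrite sqr_sqrtr // addr_ge0 ?sqr_ge0.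
have Reg : Re g = a / 2.
  rewrite /g nat_C invC_real Re_mulrc Re_addC /=; ring.
have Img : Im g = b / 2.
  rewrite /g nat_C invC_real Im_mulrc Im_addC /=; ring.
have rho0 : 0 <= rho by exact: sqrtr_ge0.
have rho2 : rho ^+ 2 = a ^+ 2 + b ^+ 2 by rewrite sqr_sqrtr // addr_ge0 ?sqr_ge0.
have ng : `|g| = (rho / 2)%:C.
  rewrite normC_sqrt Reg Img; congr (_ %:C).
  have -> : (a / 2) ^+ 2 + (b / 2) ^+ 2 = (rho / 2) ^+ 2 by rewrite !expr_div_n rho2; field.
  by rewrite sqrtr_sqr ger0_norm // divr_ge0.
have tn0 : t != 0 by apply/eqP => t0; move: t1; rewrite t0 normr0 => /eqP; rewrite eq_sym oner_eq0.
case: (ltrgt0P rho) => [rhop|rhon|rhoz]; last first.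
-
  have ab : a ^+ 2 + b ^+ 2 = 0 by rewrite -rho2 rhoz expr0n.
  have a0 : a = 0 by apply/eqP; rewrite -sqrf_eq0; apply/eqP; have := sqr_ge0 a; have := sqr_ge0 b; lra.
  have b0 : b = 0 by apply/eqP; rewrite -sqrf_eq0; apply/eqP; have := sqr_ge0 a; have := sqr_ge0 b; lra.
  have g0 : g = 0 by rewrite /g a0 b0 !mulr0 addr0 mul0r.
  have vt : v = t by rewrite /v g0 !mulr0 addr0.
  have tht : th' = t by rewrite /th' vt (negbTE tn0) t1 divr1.
  have Q0 : Q = 0 by rewrite /Q a0 b0 !mulr0 subr0.
  rewrite tht subrr Q0 rhoz (_ : complex.Re (0:C) = 0) // (_ : complex.Im (0:C) = 0) // expr0n ?invr0 ?mul0r ?mulr0 ?mul0r ?subr0 ?addr0 ?mulr0.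
  split => //; try exact: lexx. apply: mulr_ge0 => //; exact: sqr_ge0.
- by move: rhon; rewrite ltNge rho0.
set p := (a * x + b * y) / rho.
set q := Q / rho.
have rn0 : rho != 0 by rewrite gt_eqF.
have pq : p ^+ 2 + q ^+ 2 = 1.
  rewrite /p /q /Q !expr_div_n -mulrDl.
  have -> : (a * x + b * y) ^+ 2 + (x * b - y * a) ^+ 2 = (x ^+ 2 + y ^+ 2) * (a ^+ 2 + b ^+ 2) by rewrite /x /y; ring.
  rewrite xy mul1r -rho2 divff //; exact: expf_neq0.
have ea : a / rho = p * x - q * y.
  rewrite /p /q /Q; apply: (mulIf rn0); rewrite mulrBl !divfK //.
  have -> : (a * x + b * y) / rho * x * rho - (x * b - y * a) / rho * y * rho =
     a * (x ^+ 2 + y ^+ 2) by field.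
  by rewrite xy mulr1.
have eb : b / rho = p * y + q * x.
  rewrite /p /q /Q; apply: (mulIf rn0); rewrite mulrDl !divfK //.
  have -> : (a * x + b * y) / rho * y * rho + (x * b - y * a) / rho * x * rho =
     b * (x ^+ 2 + y ^+ 2) by field.
  by rewrite xy mulr1.
have Reu : Re (`|g|^-1 * g) = a / rho.
  rewrite ng invC_real mulrC Re_mulrc Reg; field; exact: rn0.
have Imu : Im (`|g|^-1 * g) = b / rho.
  rewrite ng invC_real mulrC Im_mulrc Img; field; exact: rn0.
set v1 := x * (1 + al * p) - al * q * y.
set v2 := y * (1 + al * p) + al * q * x.
have Rev : Re v = v1.
  rewrite /v Re_addC mulrC Re_mulrc Reu ea /v1 /x; ring.
have Imv : Im v = v2.
  rewrite /v Im_addC mulrC Im_mulrc Imu eb /v2 /y; ring.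
set s := Num.sqrt (v1 ^+ 2 + v2 ^+ 2).
have s0 : 0 <= s by exact: sqrtr_ge0.
have ss : s ^+ 2 = (1 + al * p) ^+ 2 + al ^+ 2 * q ^+ 2.
  rewrite sqr_sqrtr ?addr_ge0 ?sqr_ge0 // /v1 /v2.
  have -> : (x * (1 + al * p) - al * q * y) ^+ 2 + (y * (1 + al * p) + al * q * x) ^+ 2
    = (x ^+ 2 + y ^+ 2) * ((1 + al * p) ^+ 2 + al ^+ 2 * q ^+ 2) by ring.
  by rewrite xy mul1r.
have [Hi Hii Hiii] := real_comp xy pq al0 al1 s0 ss.
have nv : `|v| = s%:C by rewrite normC_sqrt Rev Imv.
have vn0 : v != 0.
  apply/eqP => v0; have : s = 0 by rewrite /s -Rev -Imv v0 /= expr0n addr0 sqrtr0.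
  move=> s00; move: ss; rewrite s00 expr0n /= => ss'.
  by have := aux_pos pq al0 al1; rewrite -ss' ltxx.
have thE : th' = v * (s^-1)%:C by rewrite /th' (negbTE vn0) nv invC_real.
have Reth : Re (th' - t) = v1 / s - x by rewrite Re_addC Re_oppC thE Re_mulrc Rev.
have Imth : Im (th' - t) = v2 / s - y by rewrite Im_addC Im_oppC thE Im_mulrc Imv.
have sn0 : s != 0.
  apply/eqP => s00; move: ss; rewrite s00 expr0n /= => ss'.
  by have := aux_pos pq al0 al1; rewrite -ss' ltxx.
rewrite Reth Imth; split => //.
- have -> : a * (v1 / s - x) + b * (v2 / s - y) =
     rho * ((a / rho) * (v1 / s - x) + (b / rho) * (v2 / s - y)).
    by field; rewrite rn0 sn0.
  rewrite ea eb.
  have -> : al * (Q ^+ 2 / rho) - 6 * rho * al ^+ 2 = rho * (al * q ^+ 2 - 6 * al ^+ 2).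
    by rewrite /q expr_div_n; field.
  by apply: ler_wpM2l.
- move=> Q0; have q0 : q = 0 by rewrite /q Q0 mul0r.
  have [e1 e2] := Hiii q0.
  apply: c_ext; apply/eqP; rewrite -subr_eq0; apply/eqP.
    by rewrite -Re_oppC -Re_addC Reth e1 subrr.
  by rewrite -Im_oppC -Im_addC Imth e2 subrr.
Qed.

End CComp.

Local Open Scope complex_scope.

Section Final.
Variable R : realType.
Local Notation C := R[i].
Local Notation Re := (@complex.Re R).
Local Notation Im := (@complex.Im R).

Lemma small_pow (eta c e : R) : 0 < eta -> eta < 1 -> 0 < c -> 0 < e ->
  exists m : nat, c * eta ^+ m <= e.
Proof.
move=> e0 e1 c0 ep.
have h : `|eta| < 1 by rewrite ger0_norm //; exact: ltW.
have := cvg_expr h.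
move/cvgrPdist_lt => /(_ (e / c)) [].
  exact: divr_gt0.
move=> N _ HN.
exists N; have := HN N (leqnn N); rewrite /= sub0r normrN ger0_norm; last first.
  by apply: exprn_ge0; exact: ltW.
rewrite ltr_pdivlMr // mulrC => h'; exact: ltW.
Qed.

Lemma comp_step n (f : 'cV[C]_n -> R) (th : 'cV[C]_n) (al : R) (a b : 'I_n -> R) (i : 'I_n) :
  inQ th -> 0 < al -> al <= 1 / 2 ->
  (forall i, dRe f th i = a i) -> (forall i, dIm f th i = b i) ->
  let d := theta_step f th al - th in
  let Q := Re (th i 0) * b i - Im (th i 0) * a i in
  let rho := Num.sqrt (a i ^+ 2 + b i ^+ 2) in
  [/\ Re (d i 0) ^+ 2 + Im (d i 0) ^+ 2 <= 4 * al ^+ 2,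
      al * (Q ^+ 2 / rho) - 6 * rho * al ^+ 2 <= a i * Re (d i 0) + b i * Im (d i 0)
    & Q = 0 -> d i 0 = 0].
Proof.
move=> hQ al0 al1 hA hB d Q rho.
have e : d i 0 = (let g := ((a i)%:C + 'i * (b i)%:C) / 2%:R in
  let v := th i 0 + al%:C * (`|g|^-1 * g) in
  if v == 0 then 1 else v / `|v|) - th i 0.
  by rewrite /d /theta_step /projQ /Xi mul_diag_mx !mxE hA hB.
rewrite e; cbv zeta.
case: (comp_C (t := th i 0) (a i) (b i) (hQ i) al0 al1) => h1 h2 h3.
split => //.
by move=> /h3 ->; rewrite subrr.
Qed.

End Final.

Local Close Scope complex_scope.
Lemma fin_ineq (R : realType) (Fth Fth0 L s cbs Ks KX X6 X4 alS : R) :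
  - Ks <= Fth - Fth0 - L -> alS - X6 <= L -> Ks <= KX -> cbs <= s -> s <= X4 ->
  X6 + KX + X4 <= alS -> Fth0 + cbs <= Fth.
Proof. lra. Qed.

Local Close Scope complex_scope.
Unset Implicit Arguments.
Theorem lemma1 (R : realType) (K Ns Nt Nr Nd : nat)
  (G : 'M[R[i]]_(Ns, Nt)) (U : 'I_K -> 'M[R[i]]_(Nr, Ns))
  (D : 'I_K -> 'M[R[i]]_(Nr, Nt)) (W : 'I_K -> 'M[R[i]]_(Nt, Nd))
  (s2 : R) (w : 'I_K -> R) (eta : R) (th : 'cV[R[i]]_Ns) :
  0 < s2 -> (forall k, 0 <= w k) -> 0 < eta -> eta < 1 -> inQ th ->
  exists beta0 : R, 0 < beta0 /\
    forall beta : R, 0 < beta -> beta <= beta0 ->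
    forall c : R, 0 < c ->
    exists m : nat, accept (wsr G U D W s2 w) th beta (c * eta ^+ m).
Proof.
move=> s20 w0 eta0 eta1 hQ.
set f := wsr G U D W s2 w.
have [a [b Hab]] := @Sm_wsr R K Ns Nt Nr Nd G U D W s2 w th s20.
have hA : forall i, dRe f th i = a i by move=> i; exact: (SmAB_dRe i Hab).
have hB : forall i, dIm f th i = b i by move=> i; exact: (SmAB_dIm i Hab).
have [r [K0 [M0 [r0 [K00 [M00 Hf]]]]]] := Hab.
set Q := fun i => complex.Re (th i 0) * b i - complex.Im (th i 0) * a i.
set rho := fun i => Num.sqrt (a i ^+ 2 + b i ^+ 2).
have rho0 : forall i, 0 <= rho i by move=> i; exact: sqrtr_ge0.
set S := \sum_i (Q i ^+ 2 / rho i).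
have S0 : 0 <= S by apply: sumr_ge0 => i _; apply: divr_ge0 => //; exact: sqr_ge0.
set N : R := Ns%:R.
have N0 : 0 <= N by exact: ler0n.
exists 1; split => // beta b0 b1 c c0.
have cb0 : 0 <= beta / (2 * N) by apply: divr_ge0; [exact: ltW | apply: mulr_ge0].
have cb1 : beta / (2 * N) <= 1.
  case: (posnP Ns) => [n0|np].
    by rewrite /N n0 mulr0 invr0 mulr0.
  have N1 : 1 <= N by rewrite /N ler1n.
  rewrite ler_pdivrMr; last lra. lra.
have stepP : forall al, 0 < al -> al <= 1 / 2 ->
   let d := theta_step f th al - th in
   (forall i, complex.Re (d i 0) ^+ 2 + complex.Im (d i 0) ^+ 2 <= 4 * al ^+ 2) /\
   (forall i, al * (Q i ^+ 2 / rho i) - 6 * rho i * al ^+ 2 <=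
       a i * complex.Re (d i 0) + b i * complex.Im (d i 0)) /\
   (forall i, Q i = 0 -> d i 0 = 0).
  move=> al al0 al1 d; split; [|split] => i.
  - by case: (comp_step i hQ al0 al1 hA hB).
  - by case: (comp_step i hQ al0 al1 hA hB).
  - by case: (comp_step i hQ al0 al1 hA hB).
have sqnorm0 : sqnorm (0 : 'cV[R[i]]_Ns) = 0.
  by rewrite /sqnorm big1 // => i _; rewrite mxE /= expr0n /= addr0.
case: (ltrgt0P S) => [Sp|Sn|Sz]; last first.
-
  have Q0 : forall i, Q i = 0.
    move=> i.
    have hz := psumr_eq0P (fun i _ => divr_ge0 (sqr_ge0 (Q i)) (rho0 i)) Sz (i := i) isT.
    case: (eqVneq (rho i) 0) => [rz|rn].
      have ab : a i ^+ 2 + b i ^+ 2 = 0.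
        by rewrite -(@sqr_sqrtr _ (a i ^+ 2 + b i ^+ 2)) ?addr_ge0 ?sqr_ge0 // -/(rho i) rz expr0n.
      have a0 : a i = 0.
        by apply/eqP; rewrite -sqrf_eq0; apply/eqP; have := sqr_ge0 (a i); have := sqr_ge0 (b i); lra.
      have b0' : b i = 0.
        by apply/eqP; rewrite -sqrf_eq0; apply/eqP; have := sqr_ge0 (a i); have := sqr_ge0 (b i); lra.
      by rewrite /Q a0 b0' !mulr0 subr0.
    move/eqP: hz; rewrite mulf_eq0 invr_eq0 (negbTE rn) orbF sqrf_eq0 => /eqP //.
  have h12 : (0 : R) < 1 / 2 by lra.
  have [m hm] := @small_pow R eta c (1 / 2) eta0 eta1 c0 h12.
  have al0 : 0 < c * eta ^+ m by apply: mulr_gt0 => //; exact: exprn_gt0.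
  have [_ [_ h3]] := stepP _ al0 hm.
  have dz : theta_step f th (c * eta ^+ m) - th = 0.
    apply/matrixP => i j; rewrite ord1 [RHS]mxE; exact: h3 i (Q0 i).
  exists m; rewrite /accept -/f dz sqnorm0 mulr0 addr0.
  have -> : theta_step f th (c * eta ^+ m) = th by apply/eqP; rewrite -subr_eq0 dz.
  exact: lexx.
- by move: Sn; rewrite ltNge S0.
set B := 6 * \sum_i rho i + 4 * N * K0 + 4 * N.
have B0 : 0 <= B.
  apply: addr_ge0; [apply: addr_ge0|]; last by apply: mulr_ge0.
    by apply: mulr_ge0 => //; apply: sumr_ge0 => i _.
  by apply: mulr_ge0 => //; apply: mulr_ge0.
set a0 := Num.min (1 / 2) (Num.min (S / (B + 1)) (r / (4 * N + 1))).
have a0p : 0 < a0.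
  rewrite !lt_min; apply/andP; split; first lra.
  apply/andP; split; apply: divr_gt0 => //; lra.
have [m hm] := @small_pow R eta c a0 eta0 eta1 c0 a0p.
exists m.
set al := c * eta ^+ m in hm *.
have al0 : 0 < al by apply: mulr_gt0 => //; exact: exprn_gt0.
move: hm; rewrite !le_min => /and3P[al12 alS alr].
have [h1 [h2 _]] := stepP _ al0 al12.
set d := theta_step f th al - th in h1 h2 *.
have s0 : 0 <= sqnorm d.
  by apply: sumr_ge0 => i _; apply: addr_ge0; exact: sqr_ge0.
have sq : sqnorm d <= 4 * N * al ^+ 2.
  rewrite /sqnorm; apply: le_trans (ler_sum _ (fun i _ => h1 i)) _.
  rewrite sumr_const card_ord -mulr_natr -/N.
  rewrite le_eqVlt; apply/orP; left; apply/eqP; ring.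
have sr : sqnorm d <= r.
  have a2 : al ^+ 2 <= al by rewrite expr2; have := ltW al0; nra.
  have : N * al ^+ 2 <= N * al by apply: ler_wpM2l.
  move: alr; rewrite ler_pdivlMr; last lra.
  lra.
have [hf _] := Hf d sr.
have e : th + d = theta_step f th al by rewrite /d addrC subrK.
rewrite e in hf.
have hlin : al * S - 6 * al ^+ 2 * \sum_i rho i <= lin a b d.
  apply: le_trans (ler_sum _ (fun i _ => h2 i)).
  rewrite sumrB /S !mulr_sumr le_eqVlt; apply/orP; left; apply/eqP; congr (_ - _); apply: eq_bigr => i _; ring.
have hK : K0 * sqnorm d <= K0 * (4 * N * al ^+ 2) by apply: ler_wpM2l.
have hc : beta / (2 * N) * sqnorm d <= 1 * sqnorm d by apply: ler_wpM2r.
have alB : al * B <= S.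
  move: alS; rewrite ler_pdivlMr; last lra.
  lra.
have hB2 : al * (al * B) <= al * S by apply: ler_wpM2l => //; exact: ltW.
have eB : al * (al * B) = 6 * al ^+ 2 * \sum_i rho i + K0 * (4 * N * al ^+ 2) + 4 * N * al ^+ 2.
  by rewrite /B; ring.
move: hf; rewrite ler_norml => /andP[hf1 hf2].
rewrite /accept -/f -/d.
rewrite mul1r in hc; rewrite eB in hB2.
rewrite -/N. exact: (@fin_ineq R _ _ _ _ _ _ _ _ _ _ hf1 hlin hK hc sq hB2).
Qed.
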